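(* Let $p$ be a prime, $n$ a positive integer, and for $j=0,\dots,p-1$ let $f_j:\mathbb{F}_p^n\to\mathbb{F}_p$ be functions. Define $F:\mathbb{F}_p^{n+2}=\mathbb{F}_p^n\times\mathbb{F}_p\times\mathbb{F}_p\to\mathbb{F}_p$ by \[F(x,x_{n+1},y)=f_y(x)+x_{n+1}y,\] where $f_y$ denotes $f_j$ for $j$ the element $y\in\mathbb{F}_p=\{0,\dots,p-1\}$. Then $F$ is bent if and only if $f_j$ is bent for every $0\le j\le p-1$.
   Context: On $\mathbb{F}_p^N$ use the standard dot product. Walsh transform: $\widehat f(b)=\sum_{x\in\mathbb{F}_p^N}\epsilon_p^{f(x)-b\cdot x}$, $\epsilon_p=e^{2\pi i/p}$; $f$ is bent if $|\widehat f(b)|=p^{N/2}$ for all $b\in\mathbb{F}_p^N$. *)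

(* Defs.v *)
From mathcomp Require Import all_boot all_order all_algebra all_field.
Set Implicit Arguments. Unset Strict Implicit. Unset Printing Implicit Defensive.
Import Order.TTheory GRing.Theory Num.Theory.
Local Open Scope ring_scope.

Definition dotp (p N : nat) (x b : 'rV['F_p]_N) : 'F_p := \sum_(i < N) x 0 i * b 0 i.

(* eps_p = e^{2 pi i / p}: p.-root (-1) is the p-th root of -1 of minimal
   nonnegative argument, i.e. e^{i pi / p}; its square is e^{2 pi i / p}. *)
Definition eps (p : nat) : algC := (p.-root (-1)) ^+ 2.

(* Walsh transform: \hat f(b) = sum_x eps_p^{f(x) - b.x}; the exponent is an
   element of F_p = {0,...,p-1}, used via its natural-number representative. *)
Definition walsh (p N : nat) (f : 'rV['F_p]_N -> 'F_p) (b : 'rV['F_p]_N) : algC :=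
  \sum_(x : 'rV['F_p]_N) eps p ^+ (nat_of_ord (f x - dotp b x)).

Definition bent (p N : nat) (f : 'rV['F_p]_N -> 'F_p) : Prop :=
  forall b : 'rV['F_p]_N, `|walsh f b| = sqrtC ((p%:R : algC) ^+ N).

(* Main.v *)
Require Import Defs.
From mathcomp Require Import all_boot all_order all_algebra all_field.
Import Order.TTheory GRing.Theory Num.Theory.
Local Open Scope ring_scope.
From mathcomp Require Import ring.

Lemma one_neqN1 : (1 : algC) != -1.
Proof.
apply/eqP => h; have : (1 + 1 : algC) == 0.
  by rewrite addr_eq0 -h.
by rewrite -[1 + 1]/(2%:R : algC) pnatr_eq0.
Qed.

Lemma rootN1_neqN1 p : prime p -> p.-root (-1 : algC) != -1.
Proof.
move=> hp; have p0 := prime_gt0 hp; have p1 := prime_gt1 hp.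
apply/eqP => hr.
have hodd : odd p.
  apply: contraT => he.
  have := rootCK p0 (-1 : algC); rewrite hr -signr_odd (negbTE he) expr0.
  by move/eqP; rewrite (negbTE one_neqN1).
have [z zp] := C_prim_root_exists p0.
have z1 : z != 1.
  apply/eqP=> ez; have := prim_order_dvd zp 1; rewrite ez expr1n eqxx.
  by rewrite dvdn1 => /eqP hp1; rewrite hp1 in p1.
have zn : z ^+ p = 1 by exact: prim_expr_order zp.
suff [w [wn w1 wI]] : exists w : algC, [/\ w ^+ p = 1, w != 1 & 'Im w <= 0].
  have := @rootC_Re_max _ p (-1) (- w) p0.
  rewrite exprNn wn mulr1 -signr_odd hodd expr1 => /(_ erefl).
  rewrite raddfN /= oppr_ge0 => /(_ wI).
  rewrite hr !raddfN /= lerN2.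
  have ReN1 : 'Re (1 : algC) = 1 by apply/Creal_ReP; rewrite rpred1.
  rewrite ReN1 => hRe.
  have nw : `|w| = 1.
    by apply/eqP; rewrite -(pexpr_eq1 p0) // -normrX wn normr1.
  have [hle heq] := leif_Re_Creal w.
  have e1 : 'Re w == `|w| by rewrite nw eq_le hRe -nw hle.
  rewrite heq in e1.
  by move: w1; rewrite -[w]ger0_norm // nw eqxx.
have /orP[hI|hI] := real_leVge (Creal_Im z) (real0 _).
  by exists z.
exists z^*; split.
- by rewrite -rmorphXn zn rmorph1.
- by apply: contra z1 => /eqP h; rewrite -[z]conjCK h rmorph1.
- by rewrite Im_conj oppr_le0.
Qed.

Section S.
Variable p : nat.
Hypothesis hp : prime p.
Let p0 := prime_gt0 hp.

Lemma eps_expp : eps p ^+ p = 1.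
Proof. by rewrite /eps -exprM mulnC exprM rootCK // sqrrN expr1n. Qed.

Lemma eps_neq1 : eps p != 1.
Proof.
rewrite /eps sqrf_eq1 negb_or rootN1_neqN1 // andbT.
apply/eqP => h; have := rootCK p0 (-1 : algC); rewrite h expr1n => /eqP.
by rewrite (negbTE one_neqN1).
Qed.

Lemma eps_ord k : (0 < k < p)%N -> eps p ^+ k != 1.
Proof.
case/andP=> k0 kp.
have [m mp mdv] := prim_order_exists p0 eps_expp.
have /orP[/eqP m1|/eqP mP] := (primeP hp).2 m mdv.
  by have := prim_expr_order mp; rewrite m1 expr1 => /eqP; rewrite (negbTE eps_neq1).
by rewrite -(prim_order_dvd mp) mP gtnNdvd.
Qed.

Definition ex (t : 'F_p) : algC := eps p ^+ (nat_of_ord t).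

Lemma ex_add a b : ex (a + b) = ex a * ex b.
Proof.
have e : nat_of_ord (a + b) = ((a + b)%N %% (Zp_trunc (pdiv p)).+2)%N := erefl.
have q1 : eps p ^+ (Zp_trunc (pdiv p)).+2 = 1 by rewrite Fp_cast // eps_expp.
by rewrite /ex e expr_mod // exprD.
Qed.

Lemma ex0 : ex 0 = 1.
Proof. by rewrite /ex expr0. Qed.

Lemma ex_neq1 t : t != 0 -> ex t != 1.
Proof.
move=> t0; apply: eps_ord.
have -> : (nat_of_ord t < p)%N by apply: (leq_trans (ltn_ord t)); rewrite Fp_cast.
by rewrite andbT lt0n; apply: contra t0 => /eqP h; apply/eqP/val_inj.
Qed.

Lemma norm_ex t : `|ex t| = 1.
Proof.
have h : `|eps p| = 1.
  by apply/eqP; rewrite -(pexpr_eq1 p0) // -normrX eps_expp normr1.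
by rewrite /ex normrX h expr1n.
Qed.

Lemma ex_sum t : \sum_(s : 'F_p) ex (s * t) = if t == 0 then p%:R else 0.
Proof.
have [->|t0] := eqVneq t 0.
  under eq_bigr do rewrite mulr0 ex0.
  by rewrite sumr_const card_Fp.
set S := \sum_(s : 'F_p) _.
have h : ex t * S = S.
  rewrite mulr_sumr /S [RHS](reindex_inj (addIr (1 : 'F_p))).
  by apply: eq_bigr => s _; rewrite mulrDl mul1r ex_add mulrC.
have : (ex t - 1) * S == 0 by rewrite mulrBl h mul1r subrr.
by rewrite mulf_eq0 subr_eq0 (negbTE (@ex_neq1 t t0)) => /eqP.
Qed.

End S.
Section S2.
Variable p : nat.
Hypothesis hp : prime p.

Lemma sum_rowmx m k (g : 'rV['F_p]_(m + k) -> algC) :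
  \sum_z g z = \sum_(r : 'rV['F_p]_k) \sum_(x : 'rV['F_p]_m) g (row_mx x r).
Proof.
rewrite pair_big /= (reindex (fun u : 'rV['F_p]_k * 'rV['F_p]_m => row_mx u.2 u.1)) //=.
exists (fun z => (rsubmx z, lsubmx z)) => [[r x] _ | z _] /=.
  by rewrite row_mxKl row_mxKr.
by rewrite hsubmxK.
Qed.

Definition mk2 (s y : 'F_p) : 'rV['F_p]_2 := \row_(i < 2) if val i == 0%N then s else y.

Lemma mk2_0 s y : (mk2 s y) 0 0 = s. Proof. by rewrite /mk2 mxE. Qed.
Lemma mk2_1 s y : (mk2 s y) 0 1 = y. Proof. by rewrite /mk2 mxE. Qed.

Lemma sum_rV2 (g : 'rV['F_p]_2 -> algC) :
  \sum_r g r = \sum_(y : 'F_p) \sum_(s : 'F_p) g (mk2 s y).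
Proof.
rewrite pair_big /= (reindex (fun u : 'F_p * 'F_p => mk2 u.2 u.1)) //=.
exists (fun r : 'rV['F_p]_2 => (r 0 1, r 0 0)) => [[y s] _ | r _] /=.
  by rewrite /mk2 !mxE.
apply/rowP => -[[|[|//]]] Hi; rewrite /mk2 mxE /=; congr (r 0 _); exact: val_inj.
Qed.

Lemma dotp_split m k (b1 x : 'rV['F_p]_m) (b2 r : 'rV['F_p]_k) :
  dotp (row_mx b1 b2) (row_mx x r) = dotp b1 x + dotp b2 r.
Proof.
by rewrite /dotp big_split_ord /=; congr (_ + _); apply: eq_bigr => i _;
  rewrite ?row_mxEl ?row_mxEr.
Qed.

Lemma dotp2 (b r : 'rV['F_p]_2) : dotp b r = b 0 0 * r 0 0 + b 0 1 * r 0 1.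
Proof.
rewrite /dotp !big_ord_recl big_ord0 addr0.
by have -> : lift ord0 ord0 = 1 :> 'I_2 by apply: val_inj.
Qed.
End S2.
Section S3.
Variable p : nat.
Hypothesis hp : prime p.

Lemma walshF n (f : 'F_p -> 'rV['F_p]_n -> 'F_p) b1 (b2 : 'rV['F_p]_2) :
  walsh (fun z : 'rV['F_p]_(n + 2) =>
          f ((rsubmx z) 0 1) (lsubmx z) + (rsubmx z) 0 0 * (rsubmx z) 0 1) (row_mx b1 b2)
  = p%:R * (ex p (- (b2 0 1 * b2 0 0)) * walsh (f (b2 0 0)) b1).
Proof.
set c := b2 0 0; set d := b2 0 1.
rewrite /walsh sum_rowmx sum_rV2.
transitivity (\sum_(y : 'F_p) (ex p (- (d * y)) * \sum_x ex p (f y x - dotp b1 x))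
                 * \sum_(s : 'F_p) ex p (s * (y - c))).
  apply: eq_bigr => y _; rewrite mulr_sumr; apply: eq_bigr => s _.
  rewrite mulr_sumr mulr_suml; apply: eq_bigr => x _.
  rewrite row_mxKl row_mxKr dotp_split dotp2 !mk2_0 !mk2_1.
  rewrite -/c -/d.
  rewrite -!(@ex_add p hp) /ex.
  congr (_ ^+ _); congr (nat_of_ord _); ring.
under eq_bigr do rewrite (@ex_sum p hp) subr_eq0.
rewrite (bigD1 c) //= eqxx [X in _ + X]big1 ?addr0.
  by rewrite mulrC.
by move=> y /negbTE ->; rewrite mulr0.
Qed.
End S3.

Lemma sqrt_step (p N : nat) :
  sqrtC ((p%:R : algC) ^+ (N + 2)) = p%:R * sqrtC ((p%:R : algC) ^+ N).
Proof.
by rewrite exprD sqrtCM ?sqrCK ?nnegrE ?exprn_ge0 ?ler0n // mulrC.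
Qed.

Theorem proposition1 (p : nat) (hp : prime p) (n : nat) (hn : (0 < n)%N)
  (f : 'F_p -> 'rV['F_p]_n -> 'F_p) :
  bent (fun z : 'rV['F_p]_(n + 2) =>
          f ((rsubmx z) 0 1) (lsubmx z) + (rsubmx z) 0 0 * (rsubmx z) 0 1)
  <-> (forall j : 'F_p, bent (f j)).
Proof.
have pnz : (p%:R : algC) != 0 by rewrite pnatr_eq0 -lt0n prime_gt0.
have normF b1 b2 : `|walsh (fun z : 'rV['F_p]_(n + 2) =>
          f ((rsubmx z) 0 1) (lsubmx z) + (rsubmx z) 0 0 * (rsubmx z) 0 1) (row_mx b1 b2)|
   = p%:R * `|walsh (f (b2 0 0)) b1|.
  by rewrite walshF // normrM normr_nat normrM norm_ex // mul1r.
split.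
- move=> HF j b1; have := HF (row_mx b1 (@mk2 p j 0)).
  by rewrite normF mk2_0 sqrt_step => /(mulfI pnz).
- by move=> Hf b; rewrite -[b]hsubmxK normF sqrt_step Hf.
Qed.
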